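(* Let $k\ge1$ be odd, $\omega=\frac{-1+\sqrt{-3}}{2}$, and with $S,T,T_\omega=\begin{psmallmatrix}1&\omega\\0&1\end{psmallmatrix},L=\begin{psmallmatrix}\omega^2&0\\0&\omega\end{psmallmatrix},U=TS,E=T_\omega SL$ let $W_{k,k}=\ker(\mathbf{1}+S)\cap\ker(\mathbf{1}-L)\cap\ker(\mathbf{1}+U+U^2)\cap\ker(\mathbf{1}+E+E^2)$. Let $\zeta=e^{\pi i/3}$ and $\varepsilon_3=\begin{psmallmatrix}\zeta&0\\0&1\end{psmallmatrix}$, so $P|\varepsilon_3=P(\zeta z,\bar\zeta\bar z)$. Then $W_{k,k}|\varepsilon_3=W_{k,k}$, and hence $$W_{k,k}=\bigoplus_{j=1}^{6}W_{k,k}^{\zeta^j},\qquad W_{k,k}^{\zeta^j}=W_{k,k}\cap\{P\in V_{k,k}:P(\zeta z,\bar\zeta\bar z)=\zeta^jP(z,\bar z)\}.$$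
   Context: $S=\begin{psmallmatrix}0&-1\\1&0\end{psmallmatrix}$, $T=\begin{psmallmatrix}1&1\\0&1\end{psmallmatrix}$. $V_{k,k}$: polynomials $\sum_{0\le i,j\le k}c_{ij}z^i\bar z^j$ over $\mathbb{C}$ with right action $(P|\gamma)(z,\bar z)=(cz+e)^k\overline{(cz+e)}^kP\!\left(\frac{az+b}{cz+e},\frac{\bar a\bar z+\bar b}{\bar c\bar z+\bar e}\right)$ for $\gamma=\begin{psmallmatrix}a&b\\c&e\end{psmallmatrix}$, extended linearly; $\ker(X)=\{P:P|X=0\}$; $W|\varepsilon_3=\{P|\varepsilon_3:P\in W\}$. *)

(* Defs.v *)
From HB Require Import structures.
From mathcomp Require Import all_boot all_order all_algebra all_field.
Set Implicit Arguments. Unset Strict Implicit. Unset Printing Implicit Defensive.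
Import Order.TTheory GRing.Theory Num.Theory.
Local Open Scope ring_scope.

(* An element P = sum_{0<=i,j<=k} c_ij z^i zbar^j of V_{k,k} is represented
   by its coefficient matrix c : 'M[algC]_(k.+1), c i j = c_ij. *)

Definition V (k : nat) := 'M[algC]_(k.+1).

Definition mx2 (a b c d : algC) : 'M[algC]_2 :=
  \matrix_(i < 2, j < 2)
    if i == 0 :> nat then (if j == 0 :> nat then a else b)
    else (if j == 0 :> nat then c else d).

Definition mobpart (k i : nat) (a b c e : algC) : {poly algC} :=
  ('X * a%:P + b%:P) ^+ i * ('X * c%:P + e%:P) ^+ (k - i).

(* (P|g)(z,zbar) = (cz+e)^k conj(cz+e)^k P((az+b)/(cz+e), conj((az+b)/(cz+e))),
   i.e. with z and zbar as independent variables,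
   sum_{i,j} c_ij (az+b)^i (cz+e)^(k-i) conj(a) zb + conj(b))^j (conj(c) zb + conj(e))^(k-j). *)
Definition act (k : nat) (g : 'M[algC]_2) (P : V k) : V k :=
  let a := g 0 0 in let b := g 0 1 in let c := g 1 0 in let e := g 1 1 in
  \matrix_(i' < k.+1, j' < k.+1)
    \sum_(i < k.+1) \sum_(j < k.+1)
      P i j * (mobpart k i a b c e)`_i' * (mobpart k j a^* b^* c^* e^*)`_j'.

Definition omega : algC := (-1 + sqrtC (-3)) / 2.
Definition zeta : algC := (1 + sqrtC (-3)) / 2.   (* = e^{pi i/3} *)

Definition Smx : 'M[algC]_2 := mx2 0 (-1) 1 0.
Definition Tmx : 'M[algC]_2 := mx2 1 1 0 1.
Definition Tomega : 'M[algC]_2 := mx2 1 omega 0 1.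
Definition Lmx : 'M[algC]_2 := mx2 (omega ^+ 2) 0 0 omega.
Definition Umx : 'M[algC]_2 := Tmx *m Smx.
Definition Emx : 'M[algC]_2 := Tomega *m Smx *m Lmx.
Definition eps3 : 'M[algC]_2 := mx2 zeta 0 0 1.

Definition inW (k : nat) (P : V k) : Prop :=
  [/\ P + act Smx P = 0,
      P - act Lmx P = 0,
      P + act Umx P + act (Umx *m Umx) P = 0 &
      P + act Emx P + act (Emx *m Emx) P = 0].

Definition substZeta (k : nat) (P : V k) : V k :=
  \matrix_(i < k.+1, j < k.+1) (zeta ^+ i * (zeta^*) ^+ j * P i j).

Definition inWeig (k : nat) (j : nat) (P : V k) : Prop :=
  inW P /\ substZeta P = zeta ^+ j *: P.

(* Main.v *)
Require Import Defs.
From HB Require Import structures.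
From mathcomp Require Import all_boot all_order all_algebra all_field.
From mathcomp Require Import ring zify.
Import Order.TTheory GRing.Theory Num.Theory.
Local Open Scope ring_scope.

Lemma mx2_mul (a b c d a' b' c' d' : algC) :
  mx2 a b c d *m mx2 a' b' c' d' =
  mx2 (a*a'+b*c') (a*b'+b*d') (c*a'+d*c') (c*b'+d*d').
Proof.
apply/matrixP => i j; rewrite !mxE !big_ord_recl big_ord0 addr0 !mxE /=.
case: i => [[|[|i]] Hi]; case: j => [[|[|j]] Hj] => //=.
Qed.

Lemma mx2_eq (a b c d a' b' c' d' : algC) :
  a = a' -> b = b' -> c = c' -> d = d' -> mx2 a b c d = mx2 a' b' c' d'.
Proof. by move=> -> -> -> ->. Qed.

Lemma two_neq0 : (2 : algC) != 0.
Proof. by rewrite pnatr_eq0. Qed.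

Lemma zetaE : zeta = 1 + omega.
Proof. by rewrite /zeta /omega; field. Qed.

Lemma om_rel : omega ^+ 2 + omega + 1 = 0.
Proof.
have hs : sqrtC (-3) ^+ 2 = -3 :> algC by rewrite sqrtCK.
rewrite /omega (_ : _ + _ + 1 = (sqrtC (-3) ^+ 2 + 3) / 4); last by field.
by rewrite hs addNr mul0r.
Qed.

Lemma modw (r x y : algC) : x - y = (omega ^+ 2 + omega + 1) * r -> x = y.
Proof. by rewrite om_rel mul0r => /eqP; rewrite subr_eq0 => /eqP. Qed.
Lemma I1 : eps3 *m Smx = Smx *m Smx *m Smx *m Lmx *m Lmx *m eps3.
Proof.
rewrite /Umx /Emx /Tomega /Tmx /Smx /Lmx /eps3 zetaE !mx2_mul; apply: mx2_eq.
- by apply: (modw (0)); ring.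
- by apply: (modw ((-(1%:R) * 1))); ring.
- by apply: (modw ((1%:R * 1) + (-(1%:R) * omega) + (1%:R * omega ^+ 3))); ring.
- by apply: (modw (0)); ring.
Qed.

Lemma I2 : eps3 *m Lmx = Lmx *m eps3.
Proof.
rewrite /Umx /Emx /Tomega /Tmx /Smx /Lmx /eps3 zetaE !mx2_mul; apply: mx2_eq.
- by apply: (modw (0)); ring.
- by apply: (modw (0)); ring.
- by apply: (modw (0)); ring.
- by apply: (modw (0)); ring.
Qed.

Lemma I3 : eps3 *m Umx = Lmx *m Lmx *m Smx *m Umx *m Umx *m Smx *m Lmx *m eps3.
Proof.
rewrite /Umx /Emx /Tomega /Tmx /Smx /Lmx /eps3 zetaE !mx2_mul; apply: mx2_eq.
- by apply: (modw ((1%:R * 1) + (-(1%:R) * omega ^+ 2) + (1%:R * omega ^+ 3) + (-(1%:R) * omega ^+ 5))); ring.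
- by apply: (modw ((-(1%:R) * 1) + (1%:R * omega ^+ 2) + (-(1%:R) * omega ^+ 3))); ring.
- by apply: (modw ((1%:R * 1) + (-(1%:R) * omega) + (1%:R * omega ^+ 3))); ring.
- by apply: (modw (0)); ring.
Qed.

Lemma I4 : eps3 *m (Umx *m Umx) = Lmx *m Lmx *m Smx *m Umx *m Smx *m Lmx *m eps3.
Proof.
rewrite /Umx /Emx /Tomega /Tmx /Smx /Lmx /eps3 zetaE !mx2_mul; apply: mx2_eq.
- by apply: (modw (0)); ring.
- by apply: (modw ((-(1%:R) * 1) + (1%:R * omega ^+ 2) + (-(1%:R) * omega ^+ 3))); ring.
- by apply: (modw ((1%:R * 1) + (-(1%:R) * omega) + (1%:R * omega ^+ 3))); ring.
- by apply: (modw ((-(1%:R) * 1) + (1%:R * omega))); ring.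
Qed.

Lemma I5 : eps3 *m Emx = Smx *m Umx *m Umx *m Smx *m eps3.
Proof.
rewrite /Umx /Emx /Tomega /Tmx /Smx /Lmx /eps3 zetaE !mx2_mul; apply: mx2_eq.
- by apply: (modw ((-(1%:R) * 1) + (1%:R * omega ^+ 2))); ring.
- by apply: (modw ((-(1%:R) * 1))); ring.
- by apply: (modw ((1%:R * 1))); ring.
- by apply: (modw (0)); ring.
Qed.

Lemma I6 : eps3 *m (Emx *m Emx) = Smx *m Umx *m Smx *m eps3.
Proof.
rewrite /Umx /Emx /Tomega /Tmx /Smx /Lmx /eps3 zetaE !mx2_mul; apply: mx2_eq.
- by apply: (modw ((-(1%:R) * omega ^+ 3) + (1%:R * omega ^+ 5))); ring.
- by apply: (modw ((-(1%:R) * 1) + (1%:R * omega) + (-(1%:R) * omega ^+ 3))); ring.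
- by apply: (modw ((1%:R * 1) + (-(1%:R) * omega ^+ 2) + (1%:R * omega ^+ 3))); ring.
- by apply: (modw ((1%:R * 1) + (-(1%:R) * omega))); ring.
Qed.

Lemma I7 : eps3 *m eps3 *m eps3 *m eps3 *m eps3 *m eps3 = mx2 1 0 0 1.
Proof.
rewrite /Umx /Emx /Tomega /Tmx /Smx /Lmx /eps3 zetaE !mx2_mul; apply: mx2_eq.
- by apply: (modw ((6%:R * omega) + (9%:R * omega ^+ 2) + (5%:R * omega ^+ 3) + (1%:R * omega ^+ 4))); ring.
- by apply: (modw (0)); ring.
- by apply: (modw (0)); ring.
- by apply: (modw (0)); ring.
Qed.


Lemma mul2E (g h : 'M[algC]_2) i j : (g *m h) i j = g i 0 * h 0 j + g i 1 * h 1 j.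
Proof.
rewrite mxE !big_ord_recl big_ord0 addr0.
have -> : lift ord0 ord0 = 1 :> 'I_2 by apply/val_inj.
by have -> : ord0 = 0 :> 'I_2 by apply/val_inj.
Qed.

Definition Mg k (g : 'M[algC]_2) : 'M[algC]_(k.+1) :=
  \matrix_(i, i') (mobpart k i (g 0 0) (g 0 1) (g 1 0) (g 1 1))`_i'.

Lemma act_mx k g (P : V k) :
  act g P = (Mg k g)^T *m P *m Mg k (map_mx (@Num.conj algC) g).
Proof.
apply/matrixP => i' j'; rewrite !mxE.
under [RHS]eq_bigr => j _ do rewrite !mxE mulr_suml.
rewrite exchange_big /=; apply: eq_bigr => i _; apply: eq_bigr => j _.
by rewrite !mxE; ring.
Qed.

Section H.
Variables (a' b' c' e' : algC).
Let u : {poly algC} := 'X * a'%:P + b'%:P.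
Let v : {poly algC} := 'X * c'%:P + e'%:P.
Definition H n (p : {poly algC}) := \sum_(m < n.+1) p`_m *: (u ^+ m * v ^+ (n - m)).

Lemma HX n (p : {poly algC}) : (size p <= n.+1)%N -> H n.+1 ('X * p) = u * H n p.
Proof.
move=> _; rewrite /H big_ord_recl coefXM /= scale0r add0r mulr_sumr.
apply: eq_bigr => m _; rewrite /bump /= add1n coefXM /= exprS subSS.
by rewrite -scalerAr mulrA.
Qed.

Lemma HV n (p : {poly algC}) : (size p <= n.+1)%N -> H n.+1 p = v * H n p.
Proof.
move=> sp; rewrite /H big_ord_recr /= (nth_default 0 sp) scale0r addr0 mulr_sumr.
apply: eq_bigr => m _; rewrite -scalerAr.
rewrite subSn; last by have := ltn_ord m.
by rewrite exprS mulrCA.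
Qed.

Lemma HD n p q : H n (p + q) = H n p + H n q.
Proof. by rewrite /H -big_split; apply: eq_bigr => m _; rewrite coefD scalerDl. Qed.

Lemma HZ n c p : H n (c *: p) = c *: H n p.
Proof. by rewrite /H scaler_sumr; apply: eq_bigr => m _; rewrite coefZ scalerA. Qed.

Lemma Hlin n (p : {poly algC}) a b : (size p <= n.+1)%N ->
  H n.+1 (('X * a%:P + b%:P) * p) = (u * a%:P + v * b%:P) * H n p.
Proof.
move=> sp; have -> : ('X * a%:P + b%:P) * p = a *: ('X * p) + b *: p.
  by rewrite -!mul_polyC; ring.
rewrite HD !HZ HX // HV //.
by rewrite -!mul_polyC; ring.
Qed.

Lemma size_lin (a b : algC) (p : {poly algC}) n : (size p <= n.+1)%N ->
  (size (('X * a%:P + b%:P) * p)%R <= n.+2)%N.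
Proof.
move=> sp; apply: leq_trans (size_mul_leq _ _) _.
have h1 : (size ('X * a%:P + b%:P)%R <= 2)%N.
  apply: leq_trans (size_polyD _ _) _; rewrite geq_max; apply/andP; split.
    by rewrite mulrC mul_polyC; apply: leq_trans (size_scale_leq _ _) _; rewrite size_polyX.
  by apply: leq_trans (size_polyC_leq1 _) _.
move: h1 sp; move: (size _) (size p) => x y; lia.
Qed.

Lemma Hmob (a b c e : algC) (i j : nat) :
  (size (('X * a%:P + b%:P) ^+ i * ('X * c%:P + e%:P) ^+ j)%R <= (i + j).+1)%N /\
  H (i + j) (('X * a%:P + b%:P) ^+ i * ('X * c%:P + e%:P) ^+ j) =
  (u * a%:P + v * b%:P) ^+ i * (u * c%:P + v * e%:P) ^+ j.
Proof.
elim: i => [|i [IHs IHh]].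
  elim: j => [|j [IHs IHh]].
    by rewrite !expr0 mulr1 /H big_ord1 coefC /= scale1r !expr0 mulr1 size_poly1.
  rewrite !expr0 !mul1r add0n in IHs IHh *; rewrite exprS; split; first exact: size_lin.
  by rewrite Hlin // IHh exprS.
rewrite addSn exprS -mulrA; split; first exact: size_lin.
by rewrite Hlin // IHh exprS mulrA.
Qed.
End H.

Lemma mobpart_mul k (i : 'I_k.+1) (g h : 'M[algC]_2) :
  mobpart k i ((g *m h) 0 0) ((g *m h) 0 1) ((g *m h) 1 0) ((g *m h) 1 1) =
  \sum_(m < k.+1) (mobpart k i (g 0 0) (g 0 1) (g 1 0) (g 1 1))`_m *:
                    mobpart k m (h 0 0) (h 0 1) (h 1 0) (h 1 1).
Proof.
have [_ HH] := Hmob (h 0 0) (h 0 1) (h 1 0) (h 1 1) (g 0 0) (g 0 1) (g 1 0) (g 1 1) i (k - i).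
rewrite subnKC in HH; last by rewrite -ltnS.
rewrite [RHS](_ : _ = H (h 0 0) (h 0 1) (h 1 0) (h 1 1) k (mobpart k i (g 0 0) (g 0 1) (g 1 0) (g 1 1))) //.
rewrite /mobpart HH !mul2E !polyCD !polyCM.
congr (_ ^+ _ * _ ^+ _); ring.
Qed.

Lemma Mg_mul k g h : Mg k (g *m h) = Mg k g *m Mg k h.
Proof.
apply/matrixP => i i2; rewrite [LHS]mxE mobpart_mul coef_sum mxE.
by apply: eq_bigr => m _; rewrite coefZ !mxE.
Qed.

Lemma act_mul k g h (P : V k) : act (g *m h) P = act h (act g P).
Proof.
rewrite !act_mx map_mxM !Mg_mul trmx_mul.
by rewrite !mulmxA.
Qed.

Lemma actD k g (P Q : V k) : act g (P + Q) = act g P + act g Q.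
Proof. by rewrite !act_mx mulmxDr mulmxDl. Qed.
Lemma actN k g (P : V k) : act g (- P) = - act g P.
Proof. by rewrite !act_mx mulmxN mulNmx. Qed.
Lemma actZ k g c (P : V k) : act g (c *: P) = c *: act g P.
Proof. by rewrite !act_mx -scalemxAr -scalemxAl. Qed.
Lemma act0 k g : act g (0 : V k) = 0.
Proof. by rewrite !act_mx mulmx0 mul0mx. Qed.


Section J.
Variables (k : nat) (P : V k).
Lemma J1 : act Smx (act eps3 P) = act eps3 (act Lmx (act Lmx (act Smx (act Smx (act Smx P))))).
Proof. by rewrite -act_mul I1 -!act_mul ?mulmxA. Qed.
Lemma J2 : act Lmx (act eps3 P) = act eps3 (act Lmx P).
Proof. by rewrite -act_mul I2 -!act_mul ?mulmxA. Qed.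
Lemma J3 : act Umx (act eps3 P) = act eps3 (act Lmx (act Smx (act Umx (act Umx (act Smx (act Lmx (act Lmx P))))))).
Proof. by rewrite -act_mul I3 -!act_mul ?mulmxA. Qed.
Lemma J4 : act (Umx *m Umx) (act eps3 P) = act eps3 (act Lmx (act Smx (act Umx (act Smx (act Lmx (act Lmx P)))))).
Proof. by rewrite -act_mul I4 -!act_mul ?mulmxA. Qed.
Lemma J5 : act Emx (act eps3 P) = act eps3 (act Smx (act Umx (act Umx (act Smx P)))).
Proof. by rewrite -act_mul I5 -!act_mul ?mulmxA. Qed.
Lemma J6 : act (Emx *m Emx) (act eps3 P) = act eps3 (act Smx (act Umx (act Smx P))).
Proof. by rewrite -act_mul I6 -!act_mul ?mulmxA. Qed.
End J.

Lemma simpl_inner {k} (P : V k) :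
  inW P ->
  [/\ act Smx P = - P, act Lmx P = P &
      act Umx (act Umx P) = - P - act Umx P].
Proof.
case=> hS hL hU _; split.
- by apply/eqP; rewrite -addr_eq0 addrC hS.
- by apply/eqP; rewrite eq_sym -subr_eq0 hL.
- by rewrite -act_mul; move/eqP: hU; rewrite addrC addr_eq0 => /eqP ->; rewrite opprD.
Qed.

Ltac simp aS aL aUU :=
  repeat (rewrite aS || rewrite aL || rewrite actN || rewrite actD || rewrite opprK || rewrite aUU || rewrite opprD).

Lemma inW_eps {k} (P : V k) : inW P -> inW (act eps3 P).
Proof.
move=> hP; have [aS aL aUU] := simpl_inner _ hP.
split.
- rewrite J1 -actD [X in act eps3 X](_ : _ = 0) ?act0 //.
  simp aS aL aUU; by rewrite ?addrA ?subrr ?add0r ?subrr.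
- rewrite J2 -actN -actD [X in act eps3 X](_ : _ = 0) ?act0 //.
  simp aS aL aUU; by rewrite ?addrA ?subrr ?add0r ?subrr.
- rewrite J4 J3 -!actD [X in act eps3 X](_ : _ = 0) ?act0 //.
  simp aS aL aUU; by rewrite ?addrA ?subrr ?add0r ?subrr.
- rewrite J6 J5 -!actD [X in act eps3 X](_ : _ = 0) ?act0 //.
  simp aS aL aUU; by rewrite ?addrA ?subrr ?add0r ?subrr.
Qed.


Lemma map_mx2 (a b c d : algC) :
  map_mx (@Num.conj algC) (mx2 a b c d) = mx2 a^* b^* c^* d^*.
Proof.
apply/matrixP => i j; rewrite !mxE.
by case: i => [[|[|i]] Hi]; case: j => [[|[|j]] Hj] => //=.
Qed.

Lemma Mg_diag k (a : algC) : Mg k (mx2 a 0 0 1) = diag_mx (\row_i a ^+ i).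
Proof.
apply/matrixP => i i'; rewrite !mxE /mobpart /=.
rewrite !polyC0 mulr0 addr0 add0r polyC1 expr1n mulr1 exprMn -rmorphXn coefMC coefXn.
by rewrite mulr_natl mulrb eq_sym mulrb.
Qed.

Lemma act_eps3 k (P : V k) : act eps3 P = substZeta P.
Proof.
rewrite act_mx /eps3 map_mx2 rmorph0 rmorph1 !Mg_diag tr_diag_mx mul_diag_mx mul_mx_diag.
by apply/matrixP => i j; rewrite !mxE; ring.
Qed.

Lemma zeta2 : zeta ^+ 2 = omega.
Proof. apply: (modw 1); rewrite zetaE; ring. Qed.
Lemma zeta3 : zeta ^+ 3 = -1.
Proof. apply: (modw (omega + 2)); rewrite zetaE; ring. Qed.
Lemma zeta6 : zeta ^+ 6 = 1.
Proof. by rewrite (_ : 6 = 3 * 2)%N // exprM zeta3 expr2 mulrNN mulr1. Qed.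
Lemma zeta5 : zeta ^+ 5 = 1 - zeta.
Proof. apply: (modw (1 + 5 * omega + 4 * omega ^+ 2 + omega ^+ 3)); rewrite zetaE; ring. Qed.

Lemma conj_zeta : zeta^* = zeta ^+ 5.
Proof.
set c := zeta^*.
have hz : zeta ^+ 2 - zeta + 1 = 0 by apply: (modw 1); rewrite zetaE; ring.
have hc : c ^+ 2 - c + 1 = 0.
  by rewrite /c -rmorphXn -rmorphB -(rmorph1 (@Num.conj algC)) -rmorphD hz rmorph0.
have : (c - zeta) * (c - (1 - zeta)) = 0.
  have -> : (c - zeta) * (c - (1 - zeta)) = (c ^+ 2 - c + 1) - (zeta ^+ 2 - zeta + 1) by ring.
  by rewrite hc hz subrr.
move/eqP; rewrite mulf_eq0 => /orP [|]; rewrite subr_eq0 => /eqP; last by rewrite zeta5.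
move=> hcz; exfalso.
have e : sqrtC (-3) = 2 * zeta - 1 :> algC by rewrite /zeta; field.
have hs : (2 * zeta - 1)^* = 2 * zeta - 1.
  rewrite rmorphB rmorphM rmorph1 rmorph_nat; change (2 * c - 1 = 2 * zeta - 1); by rewrite hcz.
have : (2 * zeta - 1) \is Num.real by apply/CrealP.
rewrite -e realEsqr sqrtCK oppr_ge0.
move=> h; have : (3 : algC) == 0 by rewrite eq_le h ler0n.
by rewrite pnatr_eq0.
Qed.

Lemma two_ne0 : (2 : algC) != 0. Proof. by rewrite pnatr_eq0. Qed.
Lemma three_ne0 : (3 : algC) != 0. Proof. by rewrite pnatr_eq0. Qed.

Lemma unit_cert (x q r : algC) (n : nat) : (n != 0)%N ->
  x * q = n%:R + (omega ^+ 2 + omega + 1) * r -> x != 0.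
Proof.
move=> hn; rewrite om_rel mul0r addr0 => h; apply/eqP => hx.
by move: h; rewrite hx mul0r => /esym/eqP; rewrite pnatr_eq0 (negbTE hn).
Qed.

Lemma zeta_ne1 t : (t %% 6 != 0)%N -> zeta ^+ t != 1.
Proof.
rewrite -(expr_mod t zeta6) -subr_eq0.
have : (t %% 6 < 6)%N by rewrite ltn_pmod.
move: (t %% 6)%N => r; case: r => [|[|[|[|[|[|r]]]]]] //= _ _; rewrite zetaE.
- by apply: (unit_cert _ (-1 - omega) (-1) 1) => //; ring.
- by apply: (unit_cert _ (-2 - omega) (-3 - omega) 3) => //; ring.
- by apply: (unit_cert _ (-2) (-4 - 2 * omega) 4) => //; ring.
- by apply: (unit_cert _ (-1 + omega) (-3 - omega + 2 * omega ^+ 2 + omega ^+ 3) 3) => //; ring.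
- by apply: (unit_cert _ (omega) (-1 + omega + 5 * omega ^+ 2 + 4 * omega ^+ 3 + omega ^+ 4) 1) => //; ring.
Qed.

Definition dI (a b : nat) : 'I_6 := Ordinal (ltn_pmod (a + 5 * b + 5) (isT : (0 < 6)%N)).

Lemma lamE (a b : nat) : zeta ^+ a * zeta^* ^+ b = zeta ^+ (dI a b).+1.
Proof.
rewrite conj_zeta -exprM -exprD /=.
rewrite -(expr_mod (a + 5 * b) zeta6) -[RHS](expr_mod _ zeta6); congr (_ ^+ _).
lia.
Qed.

Lemma zeta_ne0 : zeta != 0.
Proof. by apply/eqP => h; move: zeta6; rewrite h expr0n /= => /eqP; rewrite eq_sym oner_eq0. Qed.

Lemma zeta_inj (i j : 'I_6) : zeta ^+ i.+1 = zeta ^+ j.+1 -> i = j.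
Proof.
move=> h.
have e : zeta ^+ i.+1 * zeta ^+ (j + 6 - i) = zeta ^+ i.+1 * 1.
  rewrite -exprD mulr1 h -(expr_mod _ zeta6) -[RHS](expr_mod _ zeta6); congr (_ ^+ _).
  have := ltn_ord i; have := ltn_ord j; lia.
have := mulfI (expf_neq0 i.+1 zeta_ne0) e => /eqP.
apply: contraTeq => hij; apply: zeta_ne1.
have := ltn_ord i; have := ltn_ord j; move: hij => /eqP hij.
have hij' : (nat_of_ord i <> nat_of_ord j) by move=> hv; apply: hij; apply: val_inj.
move: hij'; clear; move: (nat_of_ord i) (nat_of_ord j) => x y; lia.
Qed.

Lemma geo t : \sum_(m < 6) zeta ^+ (m * t) = if (t %% 6 == 0)%N then 6 else 0.
Proof.
under eq_bigr => m _ do rewrite mulnC exprM.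
case: ifP => ht.
  have -> : zeta ^+ t = 1 by rewrite -(expr_mod t zeta6) (eqP ht).
  by under eq_bigr => m _ do rewrite expr1n; rewrite sumr_const card_ord.
have hx : zeta ^+ t - 1 != 0 by rewrite subr_eq0 zeta_ne1 ?ht.
have : (zeta ^+ t - 1) * \sum_(m < 6) (zeta ^+ t) ^+ m = 0.
  by rewrite -subrX1 -exprM mulnC exprM zeta6 expr1n subrr.
by move/eqP; rewrite mulf_eq0 (negbTE hx) /= => /eqP.
Qed.

Section Comp.
Context {k : nat}.

Lemma inW0 : inW (0 : V k).
Proof. by split; rewrite !act0 ?addr0 ?subr0. Qed.

Lemma inWD (P Q : V k) : inW P -> inW Q -> inW (P + Q).
Proof.
case=> h1 h2 h3 h4 [g1 g2 g3 g4]; split; rewrite !actD.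
- by rewrite addrACA h1 g1 addr0.
- by rewrite opprD addrACA h2 g2 addr0.
- by rewrite (addrACA P) (addrACA (P + act Umx P)) h3 g3 addr0.
- by rewrite (addrACA P) (addrACA (P + act Emx P)) h4 g4 addr0.
Qed.

Lemma inWZ c (P : V k) : inW P -> inW (c *: P).
Proof.
case=> h1 h2 h3 h4; split; rewrite !actZ -?scalerDr -?scalerBr ?h1 ?h2 ?h3 ?h4 ?scaler0 //.
Qed.

Lemma inW_sum (I : finType) (F : I -> V k) : (forall i, inW (F i)) -> inW (\sum_i F i).
Proof.
move=> h; apply: (big_ind (fun X => inW X)); [exact: inW0 | exact: inWD | by move=> i _].
Qed.

Lemma iterE m (P : V k) a b :
  iter m (@substZeta k) P a b = (zeta ^+ (dI a b).+1) ^+ m * P a b.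
Proof.
elim: m => [|m IH]; first by rewrite expr0 mul1r.
by rewrite iterS mxE IH lamE [in RHS]exprS mulrA.
Qed.

Lemma inW_iter m (P : V k) : inW P -> inW (iter m (@substZeta k) P).
Proof. by move=> hP; elim: m => [|m IH] //; rewrite iterS -act_eps3; apply: inW_eps. Qed.

Definition comp (j : 'I_6) (P : V k) : V k :=
  \matrix_(a, b) (if dI a b == j then P a b else 0).

Lemma comp_eig j (P : V k) : substZeta (comp j P) = zeta ^+ j.+1 *: comp j P.
Proof.
apply/matrixP => a b; rewrite !mxE lamE.
by case: eqP => [->|_]; rewrite ?mulr0.
Qed.

Lemma comp_sum (P : V k) : \sum_(j < 6) comp j P = P.
Proof.
apply/matrixP => a b; rewrite summxE (bigD1 (dI a b)) //= mxE eqxx big1 ?addr0 //.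
by move=> j hj; rewrite mxE eq_sym (negbTE hj).
Qed.

Lemma comp_lin j (P : V k) :
  comp j P = 6^-1 *: \sum_(m < 6) zeta ^+ (m * (5 * j.+1)) *: iter m (@substZeta k) P.
Proof.
apply/matrixP => a b; rewrite !mxE summxE.
under eq_bigr => m _ do rewrite !mxE iterE mulrA -!exprM -exprD [((dI a b).+1 * _)%N]mulnC -mulnDr.
rewrite -mulr_suml geo.
have hj6 := ltn_ord j; have hd6 := ltn_ord (dI a b).
case: ifP => h6; case: eqP => hj.
- by rewrite mulrA mulVf ?mul1r // pnatr_eq0.
- exfalso; move/eqP: h6 => h6; move: hj hj6; rewrite h6; clear; move: (nat_of_ord j) => y; lia.
- exfalso; have hne' : (nat_of_ord (dI a b) <> nat_of_ord j).
    by move=> hv; move/negP: h6; apply; apply/eqP/val_inj.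
  move: hne' hj hj6 hd6; clear; move: (nat_of_ord (dI a b)) (nat_of_ord j) => x y; lia.
- by rewrite mul0r mulr0.
Qed.

Lemma inW_comp j (P : V k) : inW P -> inW (comp j P).
Proof.
move=> hP; rewrite comp_lin; apply: inWZ; apply: inW_sum => m.
by apply: inWZ; apply: inW_iter.
Qed.

End Comp.

Lemma eig0 {k} {F : V k} {j : 'I_6} {a b : 'I_k.+1} :
  substZeta F = zeta ^+ j.+1 *: F -> j != dI a b -> F a b = 0.
Proof.
move=> h hne; have := congr1 (fun M : V k => M a b) h; rewrite !mxE lamE => e.
have : (zeta ^+ (dI a b).+1 - zeta ^+ j.+1) * F a b = 0 by rewrite mulrBl e subrr.
move/eqP; rewrite mulf_eq0 subr_eq0 => /orP [/eqP hz|/eqP //].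
by rewrite (zeta_inj _ _ hz) eqxx in hne.
Qed.

Theorem proposition5p6 (k : nat) (hk : odd k) :
  (* W_{k,k} | eps3 = W_{k,k} *)
  (forall Q : V k, inW Q <-> exists P : V k, inW P /\ Q = act eps3 P) /\
  (* W_{k,k} = sum_{j=1}^6 W^{zeta^j} *)
  (forall P : V k, inW P <->
     exists f : 'I_6 -> V k,
       (forall j : 'I_6, inWeig j.+1 (f j)) /\ P = \sum_(j < 6) f j) /\
  (* the sum is direct *)
  (forall f g : 'I_6 -> V k,
     (forall j : 'I_6, inWeig j.+1 (f j)) ->
     (forall j : 'I_6, inWeig j.+1 (g j)) ->
     \sum_(j < 6) f j = \sum_(j < 6) g j -> forall j, f j = g j).
Proof.
split; [|split].
- move=> Q; split.
  + move=> hQ; exists (iter 5 (@substZeta k) Q); split; first exact: inW_iter.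
    rewrite act_eps3 -iterS; apply/matrixP => a b.
    by rewrite iterE -exprM mulnC exprM zeta6 expr1n mul1r.
  + by case=> P [hP ->]; exact: inW_eps.
- move=> P; split.
  + move=> hP; exists (fun j => comp j P); split; last by rewrite comp_sum.
    by move=> j; split; [exact: inW_comp | exact: comp_eig].
  + by case=> f [hf ->]; apply: inW_sum => j; case: (hf j).
- move=> f g hf hg hsum j; apply/matrixP => a b.
  case: (eqVneq j (dI a b)) => [->|hne]; last first.
    by rewrite (eig0 (proj2 (hf j)) hne) (eig0 (proj2 (hg j)) hne).
  have := congr1 (fun M : V k => M a b) hsum; rewrite /= !summxE.
  rewrite (bigD1 (dI a b)) //= [in RHS](bigD1 (dI a b)) //= !big1 ?addr0 //.
  + by move=> i hi; apply: (eig0 (proj2 (hg i))).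
  + by move=> i hi; apply: (eig0 (proj2 (hf i))).
Qed.
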